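(* Let $\mathfrak{R}$ be either $\mathbb{F}_q$ ($q$ a prime power) or $\mathbb{Z}_k$ ($k\ge2$), with elements listed as $0=\omega_0,\omega_1,\dots,\omega_{|\mathfrak{R}|-1}$. Let $C$ be an $\mathfrak{R}$-linear code of length $n$ and $\bm{w}\in\mathfrak{R}^n$. Then \[ Jac^{av}(C,\bm{w}; x_{a} : a \in \mathfrak{R}^{2}) =\sum_{L,R} A_{L}^{C}\, \frac{\prod_{b\in\mathfrak{R}}\binom{\ell_b(\bm{w})}{R_{(\omega_0,b)},\ldots,R_{(\omega_{|\mathfrak{R}|-1},b)}}}{\binom{n}{L_{\omega_0},\ldots,L_{\omega_{|\mathfrak{R}|-1}}}} \prod_{a\in\mathfrak{R}^2}x_a^{R_a}, \] where the sum runs over all compositions $L$ of $n$ and all Jacobi compositions $R$ of $n$ satisfying $L_c=\sum_{b\in\mathfrak{R}}R_{(c,b)}$ for every $c\in\mathfrak{R}$ and $\ell_c(\bm{w})=\sum_{b\in\mathfrak{R}}R_{(b,c)}$ for every $c\in\mathfrak{R}$.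
   Context: An $\mathbb{F}_q$-linear code of length $n$ is a subspace of $\mathbb{F}_q^n$; a $\mathbb{Z}_k$-linear code is an additive subgroup of $\mathbb{Z}_k^n$. For $\bm{u}\in\mathfrak{R}^n$ and $a\in\mathfrak{R}$, $\ell_a(\bm{u})$ is the number of coordinates of $\bm{u}$ equal to $a$. A composition of $n$ is a vector $L=(L_a:a\in\mathfrak{R})$ of non-negative integers with $\sum_a L_a=n$; a Jacobi composition of $n$ is a vector $R=(R_a:a\in\mathfrak{R}^2)$ of non-negative integers with $\sum_a R_a=n$. $A_L^C=\#\{\bm{u}\in C : \ell_a(\bm{u})=L_a \ \forall a\in\mathfrak{R}\}$. For $a\in\mathfrak{R}^2$, $r_a(\bm{u};\bm{w})=\#\{i:(u_i,w_i)=a\}$, and $Jac(C,\bm{w};x_a:a\in\mathfrak{R}^2)=\sum_{\bm{u}\in C}\prod_{a\in\mathfrak{R}^2}x_a^{r_a(\bm{u};\bm{w})}$. For $\sigma\in S_n$, $\bm{u}^\sigma=(u_{\sigma(1)},\dots,u_{\sigma(n)})$ and $C^\sigma=\{\bm{u}^\sigma:\bm{u}\in C\}$; $Jac^{av}(C,\bm{w};x_a:a\in\mathfrak{R}^2)=\frac{1}{n!}\sum_{\sigma\in S_n}Jac(C^\sigma,\bm{w};x_a:a\in\mathfrak{R}^2)$. Multinomial coefficients: $\binom{m}{m_1,\dots,m_k}=\frac{m!}{m_1!\cdots m_k!}$. *)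

(* Defs.v *)
From HB Require Import structures.
From mathcomp Require Import all_boot all_order all_fingroup all_algebra.
Set Implicit Arguments. Unset Strict Implicit. Unset Printing Implicit Defensive.
Import Order.TTheory GRing.Theory Num.Theory.
Local Open Scope ring_scope.

Section JacobiDefs.
Variables (T : finType) (n : nat).

Definition ell (u : {ffun 'I_n -> T}) (a : T) : nat := #|[set i | u i == a]|.

Definition rj (u w : {ffun 'I_n -> T}) (a : T * T) : nat :=
  #|[set i | (u i, w i) == a]|.

Definition permv (s : 'S_n) (u : {ffun 'I_n -> T}) : {ffun 'I_n -> T} :=
  [ffun i => u (s i)].

Definition permC (s : 'S_n) (C : {set {ffun 'I_n -> T}}) : {set {ffun 'I_n -> T}} :=
  [set permv s u | u in C].

Definition Jac (K : fieldType) (C : {set {ffun 'I_n -> T}}) (w : {ffun 'I_n -> T})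
  (x : T * T -> K) : K :=
  \sum_(u in C) \prod_(a : T * T) x a ^+ rj u w a.

Definition Jacav (K : fieldType) (C : {set {ffun 'I_n -> T}}) (w : {ffun 'I_n -> T})
  (x : T * T -> K) : K :=
  (n`!%:R)^-1 * \sum_(s : 'S_n) Jac (permC s C) w x.

Definition Acount (C : {set {ffun 'I_n -> T}}) (L : T -> nat) : nat :=
  #|[set u in C | [forall a, ell u a == L a]]|.

Definition multinom (K : fieldType) (m : nat) {I : finType} (f : I -> nat) : K :=
  m`!%:R / \prod_(c : I) ((f c)`!)%:R.

(* compositions of n (entries are automatically <= n) *)
Definition is_composition (L : {ffun T -> 'I_n.+1}) : bool :=
  \sum_(a : T) (L a : nat) == n.

Definition is_jacobi_composition (R : {ffun T * T -> 'I_n.+1}) : bool :=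
  \sum_(a : T * T) (R a : nat) == n.

Definition compatible (w : {ffun 'I_n -> T}) (L : {ffun T -> 'I_n.+1})
  (R : {ffun T * T -> 'I_n.+1}) : bool :=
  [forall c, (L c : nat) == \sum_(b : T) (R (c, b) : nat)] &&
  [forall c, ell w c == \sum_(b : T) (R (b, c) : nat)].

Definition JacRHS (K : fieldType) (C : {set {ffun 'I_n -> T}}) (w : {ffun 'I_n -> T})
  (x : T * T -> K) : K :=
  \sum_(L : {ffun T -> 'I_n.+1} | is_composition L)
   \sum_(R : {ffun T * T -> 'I_n.+1} | is_jacobi_composition R && compatible w L R)
     (Acount C (fun a => L a))%:R
     * (\prod_(b : T) multinom K (ell w b) (fun c : T => (R (c, b) : nat)))
     / multinom K n (fun a : T => (L a : nat))
     * \prod_(a : T * T) x a ^+ R a.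

End JacobiDefs.

Definition Fq_linear (F : finFieldType) (n : nat) (C : {set {ffun 'I_n -> F}}) : Prop :=
  [ffun _ => 0] \in C /\
  forall (c : F) (u v : {ffun 'I_n -> F}), u \in C -> v \in C ->
    [ffun i => c * u i + v i] \in C.

(* Z_k-linear code: an additive subgroup of Z_k^n *)
Definition additive_code (Z : finZmodType) (n : nat) (C : {set {ffun 'I_n -> Z}}) : Prop :=
  [ffun _ => 0] \in C /\
  forall u v : {ffun 'I_n -> Z}, u \in C -> v \in C -> [ffun i => u i - v i] \in C.

(* Main.v *)
Require Import Defs.
From HB Require Import structures.
From mathcomp Require Import all_boot all_order all_fingroup all_algebra.
From mathcomp Require Import ring.
Set Implicit Arguments. Unset Strict Implicit. Unset Printing Implicit Defensive.
Import GRing.Theory Num.Theory.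



Lemma card_uniq_map (E X : finType) (u : E -> X) m : forall (A : pred E) (s : seq X),
  size s = m ->
  #|[set t : m.-tuple E | all A t && uniq t && (map u t == s)]| =
  \prod_(x : X) #|[pred e in A | u e == x]| ^_ (count_mem x s).
Proof.
elim: m => [|m IHm] A s Hs.
  rewrite (@eq_card1 _ [tuple]); last first.
    by move=> t; rewrite [t]tuple0 inE; case: s Hs => //= _; rewrite eqxx.
  case: s Hs => // _; rewrite big1 // => x _; by rewrite ffactn0.
case: s Hs => // x0 s [Hs].
rewrite -sum1dep_card (partition_big (@thead _ _) [pred e in A | u e == x0]) /= => [|t]; last first.
  case/tupleP: t => x t; rewrite theadE /= => /andP[/andP[/andP[Ax _] _] /eqP[ux _]].
  by rewrite unfold_in Ax ux eqxx.
have HK : forall j, A j -> u j = x0 -> forall x,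
    #|[pred e in [predD1 A & j] | u e == x]| = #|[pred e in A | u e == x]| - (x0 == x).
  move=> j Aj uj x; rewrite [in RHS](cardD1 j) !unfold_in /= Aj uj.
  case: eqP => [<-|_] /=; rewrite ?subn0 ?add1n ?subn1 //; apply: eq_card => e.
    by rewrite !unfold_in /= andbA.
  rewrite !unfold_in /=; case: eqP => [->|] //=; by rewrite uj; case: eqP.
rewrite (eq_bigr (fun j => \prod_x #|[pred e in [predD1 A & j] | u e == x]| ^_ count_mem x s)); last first.
  move=> j /andP[Aj /eqP uj].
  rewrite -(IHm _ _ Hs) -sum1dep_card.
  rewrite (reindex (fun t : m.-tuple E => [tuple of j :: t])) /=; last first.
    exists (fun t : m.+1.-tuple E => [tuple of behead t]) => [t _ | t /andP[_ /eqP <-]]; first exact: val_inj.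
    by rewrite -tuple_eta.
  apply: eq_bigl => t; rewrite theadE eqxx andbT /=.
have Aj' : A j := Aj.
  rewrite Aj' uj eqseq_cons eqxx /=.
  have -> : all [predD1 A & j] t = (j \notin t) && all A t.
    apply/idP/andP => [H|[H1 H2]].
      split; first by apply/negP => jt; have := allP H j jt; rewrite /= eqxx.
      by apply/allP => e et; have := allP H e et; rewrite /= => /andP[].
    apply/allP => e et; have Ae : A e := allP H2 e et.
    apply/andP; split; last exact: Ae.
    by apply: contraNneq H1 => <-.
  by case: (j \in t); case: (all A t); case: (uniq t).
rewrite (eq_bigr (fun _ => \prod_x (#|[pred e in A | u e == x]| - (x0 == x)) ^_ count_mem x s)); last first.
  by move=> j /andP[Aj /eqP uj]; apply: eq_bigr => x _; rewrite HK.
rewrite sum_nat_cond_const.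
rewrite [in RHS](bigD1 x0) //= (bigD1 x0) //= eqxx add1n ffactnS subn1 mulnA.
congr (_ * _ * _).
  by apply: eq_card => e; rewrite !inE.
by apply: eq_bigr => x /negPf nx; rewrite eq_sym nx subn0 add0n.
Qed.



Lemma card_count (T : finType) (P : pred T) : #|P| = count P (enum T).
Proof. rewrite -sum1_card -sum1_count big_enum_cond /=. by apply: eq_bigl. Qed.

Lemma card_perm_fib (X : finType) n (u v : {ffun 'I_n -> X}) :
  #|[set s : 'S_n | permv s u == v]| = \prod_x (ell u x) ^_ (ell v x).
Proof.
pose phi (s : 'S_n) := [tuple s i | i < n].
have phi_inj : injective phi.
  move=> s1 s2 /(congr1 (fun t => tnth t)) H; apply/permP => i.
  by have := congr1 (fun f => f i) H; rewrite /= !tnth_mktuple.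
rewrite -(card_imset _ phi_inj).
have -> : phi @: [set s : 'S_n | permv s u == v] =
   [set t : n.-tuple 'I_n | all predT t && uniq t && (map u t == map v (enum 'I_n))].
  apply/setP => t; rewrite !inE all_predT /=; apply/imsetP/andP => [[s]|[ut /eqP mt]].
    rewrite inE => /eqP <- ->; split.
      by rewrite /phi /= map_inj_uniq ?enum_uniq //; apply: perm_inj.
    by rewrite /phi /= -map_comp; apply/eqP; apply: eq_map => i; rewrite /= ffunE.
  have tinj : injective (tnth t).
    move=> i j; rewrite !(tnth_nth (tnth_default t i)) => /eqP.
    by rewrite nth_uniq ?size_tuple // => /eqP; apply: val_inj.
  exists (perm tinj).
    rewrite inE; apply/eqP/ffunP => i; rewrite ffunE permE.
    have := congr1 (fun s => nth (u (tnth t i)) s i) mt.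
    rewrite (nth_map (tnth_default t i)) ?size_tuple // -tnth_nth => ->.
    by rewrite (nth_map i) ?size_enum_ord // nth_ord_enum.
  by apply: eq_from_tnth => i; rewrite tnth_mktuple permE.
rewrite (card_uniq_map u predT) ?size_map ?size_enum_ord ?card_ord //.
apply: eq_bigr => x _; congr (_ ^_ _).
  by rewrite /ell cardsE; apply: eq_card => i; rewrite !inE.
by rewrite /ell cardsE card_count count_map.
by rewrite -enumT size_enum_ord.
Qed.



Lemma card_part (I J : finType) (f : I -> J) (P : pred I) :
  #|[set i | P i]| = \sum_j #|[set i | P i && (f i == j)]|.
Proof.
rewrite -sum1dep_card (partition_big f predT) //; apply: eq_bigr => j _.
by rewrite sum1dep_card.
Qed.

Lemma ell_rj1 (T : finType) n (u w : {ffun 'I_n -> T}) c :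
  ell u c = \sum_b rj u w (c, b).
Proof.
rewrite /ell (card_part w); apply: eq_bigr => b _; rewrite /rj.
by apply: eq_card => i; rewrite !inE.
Qed.

Lemma ell_rj2 (T : finType) n (u w : {ffun 'I_n -> T}) c :
  ell w c = \sum_b rj u w (b, c).
Proof.
rewrite /ell (card_part u); apply: eq_bigr => b _; rewrite /rj.
by apply: eq_card => i; rewrite !inE xpair_eqE andbC.
Qed.

Lemma sum_rj (T : finType) n (u w : {ffun 'I_n -> T}) :
  \sum_a rj u w a = n.
Proof.
transitivity #|[set i : 'I_n | true]|; last by rewrite cardsE card_ord.
rewrite (card_part (fun i => (u i, w i))); apply: eq_bigr => a _.
by apply: eq_card => i; rewrite !inE.
Qed.

Lemma sum_ell (T : finType) n (u : {ffun 'I_n -> T}) :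
  \sum_a ell u a = n.
Proof.
transitivity #|[set i : 'I_n | true]|; last by rewrite cardsE card_ord.
rewrite (card_part u); apply: eq_bigr => a _.
by apply: eq_card => i; rewrite !inE.
Qed.

Lemma rj_le (T : finType) n (u w : {ffun 'I_n -> T}) a : rj u w a <= n.
Proof. by rewrite /rj -[X in _ <= X]card_ord max_card. Qed.

Lemma ell_le (T : finType) n (u : {ffun 'I_n -> T}) a : ell u a <= n.
Proof. by rewrite /ell -[X in _ <= X]card_ord max_card. Qed.

Lemma ell_permv (T : finType) n (s : 'S_n) (u : {ffun 'I_n -> T}) a :
  ell (permv s u) a = ell u a.
Proof.
rewrite /ell -[in RHS](card_preimset _ (@perm_inj _ s)); apply: eq_card => i.
by rewrite !inE ffunE.
Qed.

Lemma rj_permv (T : finType) n (s : 'S_n) (u w : {ffun 'I_n -> T}) a :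
  rj (permv s u) (permv s w) a = rj u w a.
Proof.
rewrite /rj -[in RHS](card_preimset _ (@perm_inj _ s)); apply: eq_card => i.
by rewrite !inE !ffunE.
Qed.



Lemma card_N (T : finType) n (u w : {ffun 'I_n -> T}) (R : T * T -> nat)
  (HL : forall c, ell u c = \sum_b R (c, b)) :
  #|[set s : 'S_n | [forall a, rj (permv s u) w a == R a]]| =
  #|[set v : {ffun 'I_n -> T} | [forall a, rj v w a == R a]]| * \prod_c (ell u c)`!.
Proof.
rewrite (card_part (fun s => permv s u)).
rewrite (eq_bigr (fun v => if [forall a, rj v w a == R a] then \prod_c (ell u c)`! else 0)); last first.
  move=> v _; case: (boolP [forall a, rj v w a == R a]) => Qv.
    rewrite (eq_card (B := [set s | permv s u == v])); last first.
      by move=> s; rewrite !inE; case: (permv s u =P v) => [->|]; rewrite ?Qv ?andbF.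
    rewrite card_perm_fib; apply: eq_bigr => c _.
    rewrite -ffactnn; congr (_ ^_ _); rewrite (ell_rj1 v w) HL.
    by apply: eq_bigr => b _; apply/eqP; move/forallP: Qv; apply.
  apply: eq_card0 => s; rewrite !inE.
  by case: (permv s u =P v) => [->|]; rewrite ?(negPf Qv) ?andbF.
by rewrite -big_mkcond /= sum_nat_cond_const.
Qed.

Lemma card_M (T : finType) n (v0 w : {ffun 'I_n -> T}) (R : T * T -> nat)
  (H0 : forall a, rj v0 w a = R a) :
  #|[set v : {ffun 'I_n -> T} | [forall a, rj v w a == R a]]| * \prod_a (R a)`! =
  \prod_b (ell w b)`!.
Proof.
pose z (v : {ffun 'I_n -> T}) := [ffun i => (v i, w i)].
have ellz : forall v a, ell (z v) a = rj v w a.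
  by move=> v a; apply: eq_card => i; rewrite !inE ffunE.
transitivity #|[set s : 'S_n | permv s w == w]|; last first.
  by rewrite card_perm_fib; apply: eq_bigr => b _; rewrite ffactnn.
rewrite (card_part (fun s => permv s v0)).
rewrite (eq_bigr (fun v => if [forall a, rj v w a == R a] then \prod_a (R a)`! else 0)); last first.
  move=> v _.
  rewrite (eq_card (B := [set s | permv s (z v0) == z v])); last first.
    move=> s; rewrite !inE; apply/andP/eqP => [[/eqP E1 /eqP E2]|E].
      apply/ffunP => i; have := congr1 (fun f : {ffun _ -> T} => f i) E1; have := congr1 (fun f : {ffun _ -> T} => f i) E2.
      by rewrite !ffunE => -> ->.
    split; apply/eqP/ffunP => i; have := congr1 (fun f : {ffun _ -> T * T} => f i) E; rewrite !ffunE;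
      by case.
  case: (boolP [forall a, rj v w a == R a]) => Qv.
    rewrite card_perm_fib; apply: eq_bigr => a _.
    by rewrite ellz H0 ellz -ffactnn (eqP (forallP Qv a)).
  apply: eq_card0 => s; rewrite !inE.
  apply/negP => /eqP E; move/negP: Qv; apply; apply/forallP => a.
  by rewrite -ellz -E ell_permv ellz H0.
by rewrite -big_mkcond /= sum_nat_cond_const.
Qed.



Lemma card_nth (Y : finType) m (y0 y : Y) (s : seq Y) : size s = m ->
  #|[set i : 'I_m | nth y0 s i == y]| = count_mem y s.
Proof.
move=> Hs; rewrite cardsE card_count.
have E : s = map (fun i : 'I_m => nth y0 s i) (enum 'I_m).
  by rewrite -[in LHS](mkseq_nth y0 s) Hs /mkseq -val_enum_ord -map_comp.
rewrite [in RHS]E count_map -enumT [RHS]count_map; by apply: eq_count => i /=.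
Qed.

Lemma exists_v0 (T : finType) n (w : {ffun 'I_n -> T}) (R : T * T -> nat)
  (HR : forall b, ell w b = \sum_c R (c, b)) :
  exists v0 : {ffun 'I_n -> T}, forall a, rj v0 w a = R a.
Proof.
case: n w HR => [|n] w HR.
  exists w => -[c b]; rewrite /rj (eq_card0 (fun i : 'I_0 => _)); last by case.
  apply/esym/eqP; rewrite -leqn0; apply: leq_trans (ell_le w b).
  by rewrite HR (bigD1 c) //= leq_addr.
pose y0 := (w ord0, w ord0).
pose s := flatten [seq nseq (R y) y | y : T * T].
have cnt : forall y, count_mem y s = R y.
  move=> y; rewrite /s count_flatten -map_comp.
  rewrite sumnE big_map big_enum /= (bigD1 y) //= big1 => [|i /negPf ne].
    by rewrite count_nseq /= eqxx mul1n addn0.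
  by rewrite count_nseq /= ne.
have ssz : size s = n.+1.
  rewrite /s size_flatten /shape -map_comp sumnE big_map big_enum /=.
  rewrite -(sum_ell w) (eq_bigr _ (fun b _ => HR b)) exchange_big pair_big /=.
  by apply: eq_bigr => -[c b] _; rewrite size_nseq.
pose z := [ffun i : 'I_n.+1 => nth y0 s i].
pose z1 := [ffun i => (z i).1].
pose z2 := [ffun i => (z i).2].
have rjz : forall a, rj z1 z2 a = R a.
  move=> a; rewrite -cnt -(card_nth y0 a ssz); apply: eq_card => i.
  by rewrite !inE !ffunE -surjective_pairing.
have ellz2 : forall b, ell z2 b = ell w b.
  by move=> b; rewrite (ell_rj2 z1) HR; apply: eq_bigr => c _; rewrite rjz.
have : 0 < #|[set s : 'S_n.+1 | permv s z2 == w]|.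
  by rewrite card_perm_fib prodn_gt0 // => b; rewrite ellz2 ffactnn fact_gt0.
rewrite card_gt0 => /set0Pn[sg]; rewrite inE => /eqP Hsg.
exists (permv sg z1) => a; by rewrite -Hsg rj_permv rjz.
Qed.

Local Open Scope ring_scope.


Definition Lu (T : finType) n (u : {ffun 'I_n -> T}) : {ffun T -> 'I_n.+1} :=
  [ffun c => inord (ell u c)].

Lemma LuE (T : finType) n (u : {ffun 'I_n -> T}) c : (Lu u c : nat) = ell u c.
Proof. by rewrite ffunE inordK // ltnS ell_le. Qed.

Lemma per_R (T : finType) n (w u : {ffun 'I_n -> T}) (K : numFieldType)
  (R : {ffun T * T -> 'I_n.+1}) :
  (n`!%:R : K)^-1 * (#|[set s : 'S_n | [forall a, rj (permv s u) w a == R a]]|%:R) =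
  if is_jacobi_composition R && compatible w (Lu u) R then
    (\prod_(b : T) multinom K (ell w b) (fun c : T => (R (c, b) : nat)))
     / multinom K n (fun a : T => (Lu u a : nat))
  else 0.
Proof.
case: ifP => [/andP[_ /andP[/forallP HL /forallP HR]] | Hn]; last first.
  rewrite (@eq_card0 _ [set s : 'S_n | [forall a, rj (permv s u) w a == R a]]) ?mulr0 //.
  move=> s; rewrite inE; apply/negP => /forallP Hs; move/negP: Hn; apply.
  have HsR : forall a, rj (permv s u) w a = R a by move=> a; apply/eqP.
  apply/andP; split; first by rewrite /is_jacobi_composition; apply/eqP; rewrite -[RHS](sum_rj (permv s u) w); apply: eq_bigr => a _; rewrite HsR.
  apply/andP; split; apply/forallP => c.
    by rewrite LuE -(ell_permv s) (ell_rj1 _ w); apply/eqP/eq_bigr => b _; rewrite HsR.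
  by rewrite (ell_rj2 (permv s u) w); apply/eqP/eq_bigr => b _; rewrite HsR.
have HL' : forall c, ell u c = (\sum_b (R (c, b) : nat))%N by move=> c; rewrite -LuE; apply/eqP.
have HR' : forall b, ell w b = (\sum_c (R (c, b) : nat))%N by move=> b; apply/eqP.
have [v0 Hv0] := @exists_v0 _ _ w (fun a => (R a : nat)) HR'.
have HM := card_M Hv0.
rewrite (@card_N _ _ u w (fun a => (R a : nat)) HL').
set M := #|_|; move: HM; rewrite -/M => HM.
have EL : (\prod_c (Lu u c)`!)%N = (\prod_c (ell u c)`!)%N.
  by apply: eq_bigr => c _; rewrite LuE.
have EQ : (\prod_b \prod_c (R (c, b))`!)%N = (\prod_a (R a)`!)%N.
  by rewrite exchange_big pair_big; apply: eq_bigr => -[c b].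
rewrite /multinom prodf_div; under [X in _ / X / _]eq_bigr do rewrite -natr_prod.
rewrite -!natr_prod EL EQ -HM !natrM.
have nz1 : (n`!%:R : K) != 0 by rewrite pnatr_eq0 -lt0n fact_gt0.
have nz2 : ((\prod_a (R a)`!)%:R : K) != 0.
  by rewrite pnatr_eq0 -lt0n prodn_gt0 // => a; rewrite fact_gt0.
have nz3 : ((\prod_c (ell u c)`!)%:R : K) != 0.
  by rewrite pnatr_eq0 -lt0n prodn_gt0 // => a; rewrite fact_gt0.
by field; rewrite nz1 nz2 nz3.
Qed.



Lemma Jac_perm (T : finType) n (C : {set {ffun 'I_n -> T}}) (w : {ffun 'I_n -> T})
  (K : fieldType) (x : T * T -> K) (s : 'S_n) :
  Jac (permC s C) w x = \sum_(u in C) \prod_a x a ^+ rj (permv s u) w a.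
Proof.
rewrite /Jac /permC big_imset //= => u1 u2 _ _ E; apply/ffunP => i.
by have := congr1 (fun f : {ffun _ -> T} => f (s^-1 i)%g) E; rewrite !ffunE permKV.
Qed.

Lemma per_u (T : finType) n (w u : {ffun 'I_n -> T}) (K : numFieldType) (x : T * T -> K) :
  (n`!%:R : K)^-1 * \sum_(s : 'S_n) \prod_a x a ^+ rj (permv s u) w a =
  \sum_(R : {ffun T * T -> 'I_n.+1} | is_jacobi_composition R && compatible w (Lu u) R)
     (\prod_(b : T) multinom K (ell w b) (fun c : T => (R (c, b) : nat)))
     / multinom K n (fun a : T => (Lu u a : nat))
     * \prod_(a : T * T) x a ^+ R a.
Proof.
pose rjF (v : {ffun 'I_n -> T}) : {ffun T * T -> 'I_n.+1} := [ffun a => inord (rj v w a)].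
rewrite (eq_bigr (fun s : 'S_n => \prod_a x a ^+ (rjF (permv s u) a : nat))); last first.
  by move=> s _; apply: eq_bigr => a _; rewrite ffunE inordK // ltnS rj_le.
rewrite (partition_big (fun s => rjF (permv s u)) predT) //=.
rewrite mulr_sumr [RHS]big_mkcond /=; apply: eq_bigr => R _.
have -> : \sum_(s | rjF (permv s u) == R) \prod_a x a ^+ rjF (permv s u) a =
    (\prod_a x a ^+ R a) *+ #|[set s : 'S_n | rjF (permv s u) == R]|.
  by rewrite -sumr_const; apply: eq_big => [s|s /eqP ->] //; rewrite inE.
rewrite -[X in _ * X]mulr_natl mulrA.
rewrite (eq_card (B := [set s : 'S_n | [forall a, rj (permv s u) w a == R a]])); last first.
  move=> s; rewrite !inE; apply/eqP/forallP => [E a|H].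
    by rewrite -E ffunE inordK // ltnS rj_le.
  by apply/ffunP => a; rewrite ffunE (eqP (H a)) inord_val.
rewrite per_R; case: ifP => _ //; by rewrite mul0r.
Qed.



Lemma main_gen (T : finType) n (C : {set {ffun 'I_n -> T}}) (w : {ffun 'I_n -> T})
  (K : numFieldType) (x : T * T -> K) : Jacav C w x = JacRHS C w x.
Proof.
rewrite /Jacav (eq_bigr _ (fun s _ => Jac_perm C w x s)) exchange_big mulr_sumr.
rewrite (eq_bigr _ (fun u _ => per_u w u x)).
pose G (L : {ffun T -> 'I_n.+1}) := \sum_(R : {ffun T * T -> 'I_n.+1} | is_jacobi_composition R && compatible w L R)
     (\prod_(b : T) multinom K (ell w b) (fun c : T => (R (c, b) : nat)))
     / multinom K n (fun a : T => (L a : nat))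
     * \prod_(a : T * T) x a ^+ R a.
rewrite (eq_bigr (fun u => G (Lu u))) //.
rewrite (partition_big (@Lu T n) (@is_composition T n)) /=; last first.
  move=> u _; rewrite /is_composition; apply/eqP; rewrite -[RHS](sum_ell u).
  by apply: eq_bigr => a _; rewrite LuE.
rewrite /JacRHS; apply: eq_bigr => L _.
rewrite (eq_bigr (fun _ => G L)); last by move=> u /andP[_ /eqP ->].
have -> : \sum_(i in C | Lu i == L) G L = G L *+ #|[set u in C | Lu u == L]|.
  by rewrite -sumr_const; apply: eq_bigl => u; rewrite inE.
have -> : Acount C (fun a : T => L a) = #|[set u in C | Lu u == L]|.
  apply: eq_card => u; rewrite !inE; congr (_ && _).
  apply/forallP/eqP => [H|<- a]; last by rewrite LuE.
  by apply/ffunP => a; apply/val_inj; rewrite /= LuE (eqP (H a)).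
rewrite -mulr_natl /G mulr_sumr; apply: eq_bigr => R _; by rewrite !mulrA.
Qed.

Theorem theorem4p2 :
  (forall (F : finFieldType) (n : nat) (C : {set {ffun 'I_n -> F}})
          (w : {ffun 'I_n -> F}) (K : numFieldType) (x : F * F -> K),
      Fq_linear C -> Jacav C w x = JacRHS C w x)
  /\
  (forall (k : nat), (1 < k)%N ->
     forall (n : nat) (C : {set {ffun 'I_n -> 'Z_k}})
            (w : {ffun 'I_n -> 'Z_k}) (K : numFieldType) (x : 'Z_k * 'Z_k -> K),
      additive_code C -> Jacav C w x = JacRHS C w x).
Proof.
by split=> [F n C w K x _|k _ n C w K x _]; apply: main_gen.
Qed.
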